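(* Let $\mathcal M=(h,M)$ be a polymatroid, $a\in M$, and $\alpha_1,\alpha_2\ge0$ real numbers with $\alpha_1+\alpha_2=h(a)$. Then there is a polymatroid $\mathcal M'=(h',\{a_1,a_2\}\cup(M\setminus\{a\}))$ (with $a_1,a_2$ new elements) such that $h'(a_i)=\alpha_i$ for $i=1,2$, and $\mathcal M$ is the factor of $\mathcal M'$ obtained by collapsing $a_1$ and $a_2$ to $a$ (i.e. $h'(A)=h(A)$ and $h'(a_1a_2A)=h(aA)$ for $A\subseteq M\setminus\{a\}$). Moreover, $\mathcal M$ is almost entropic if and only if $\mathcal M'$ is almost entropic.
   Context: A polymatroid $(h,M)$ consists of a finite set $M$ and a function $h$ on subsets of $M$ with $h(\emptyset)=0$ that is non-negative, monotone and submodular. It is almost entropic if, as a vector in $\mathbb R^{2^{|M|}-1}$, it lies in the closure of the entropic polymatroids (those of the form $A\mapsto\mathbf H(\xi_A)$ for jointly distributed discrete random variables). Juxtaposition denotes union, e.g. $a_1a_2A=\{a_1,a_2\}\cup A$. Given an equivalence relation $\cong$ on the ground set with quotient map $\phi$, the factor is the polymatroid $A\mapsto h(\phi^{-1}(A))$ on the set of classes. *)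

(* Defs.v *)
From mathcomp Require Import all_boot.
From Stdlib Require Import Reals.

Set Implicit Arguments.
Unset Strict Implicit.
Unset Printing Implicit Defensive.

Local Open Scope R_scope.

Definition polymatroid (T : finType) (h : {set T} -> R) : Prop :=
  [/\ h set0 = 0,
      (forall A, 0 <= h A),
      (forall A B : {set T}, A \subset B -> h A <= h B) &
      (forall A B : {set T}, h (A :|: B) + h (A :&: B) <= h A + h B)].

Definition distribution (Omega : finType) (p : Omega -> R) : Prop :=
  (forall w, 0 <= p w) /\ \big[Rplus/0]_(w : Omega) p w = 1.

Definition log2 (x : R) : R := ln x / ln 2.

Definition joint (T Omega : finType) (xi : T -> Omega -> nat) (A : {set T})
  (w : Omega) : {ffun T -> option nat} :=
  [ffun i => if i \in A then Some (xi i w) else None].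

Definition prob_joint (T Omega : finType) (p : Omega -> R)
  (xi : T -> Omega -> nat) (A : {set T}) (v : {ffun T -> option nat}) : R :=
  \big[Rplus/0]_(w : Omega | joint xi A w == v) p w.

Definition entropy (T Omega : finType) (p : Omega -> R)
  (xi : T -> Omega -> nat) (A : {set T}) : R :=
  - \big[Rplus/0]_(v <- undup [seq joint xi A w | w <- enum Omega])
      (prob_joint p xi A v * log2 (prob_joint p xi A v)).

Definition entropic (T : finType) (h : {set T} -> R) : Prop :=
  exists (Omega : finType) (p : Omega -> R) (xi : T -> Omega -> nat),
    distribution p /\ forall A : {set T}, h A = entropy p xi A.

Definition almost_entropic (T : finType) (h : {set T} -> R) : Prop :=
  forall eps : R, 0 < eps ->
    exists g : {set T} -> R, entropic g /\ forall A : {set T}, Rabs (g A - h A) < eps.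

(* Encoding of the ground set {a1,a2} ∪ (M \ {a}) as option M:
   a1 := Some a, a2 := None, and x ∈ M \ {a} is Some x.
   collapse a is the quotient map identifying a1 and a2 with a. *)
Definition collapse (M : finType) (a : M) (o : option M) : M :=
  match o with None => a | Some x => x end.

Definition factor (M : finType) (phi : option M -> M) (h' : {set option M} -> R)
  : {set M} -> R := fun B => h' (phi @^-1: B).

(* Main.v *)
Require Import Defs.
From HB Require Import structures.
From mathcomp Require Import all_boot.
From Stdlib Require Import Reals Lra FunctionalExtensionality.

Set Implicit Arguments.
Unset Strict Implicit.
Unset Printing Implicit Defensive.

Local Open Scope R_scope.

Lemma RplusA : associative Rplus. Proof. move=> *; lra. Qed.
Lemma RmultA : associative Rmult. Proof. move=> *; ring. Qed.
HB.instance Definition _ := Monoid.isComLaw.Build R 0 Rplus RplusA Rplus_comm Rplus_0_l.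
HB.instance Definition _ := Monoid.isComLaw.Build R 1 Rmult RmultA Rmult_comm Rmult_1_l.
HB.instance Definition _ := Monoid.isMulLaw.Build R 0 Rmult Rmult_0_l Rmult_0_r.
HB.instance Definition _ := Monoid.isAddLaw.Build R Rmult Rplus Rmult_plus_distr_r Rmult_plus_distr_l.

Lemma sumR_ge0 (I : Type) (r : seq I) (P : pred I) (F : I -> R) :
  (forall i, P i -> 0 <= F i) -> 0 <= \big[Rplus/0]_(i <- r | P i) F i.
Proof.
move=> H; elim/big_rec: _ => [|i x Pi Hx]; first lra.
have := H i Pi; lra.
Qed.

Lemma sumR_le (I : Type) (r : seq I) (P : pred I) (F G : I -> R) :
  (forall i, P i -> F i <= G i) ->
  \big[Rplus/0]_(i <- r | P i) F i <= \big[Rplus/0]_(i <- r | P i) G i.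
Proof.
move=> H; elim/big_rec2: _ => [|i x y Pi Hx]; first lra.
have := H i Pi; lra.
Qed.

Lemma sumR_opp (I : Type) (r : seq I) (P : pred I) (F : I -> R) :
  - (\big[Rplus/0]_(i <- r | P i) F i) = \big[Rplus/0]_(i <- r | P i) - F i.
Proof.
elim/big_rec2: _ => [|i x y Pi Hx]; first lra. lra.
Qed.

Definition cp (O : finType) (V : eqType) (p : O -> R) (f : O -> V) (w : O) : R :=
  \big[Rplus/0]_(w' | f w' == f w) p w'.

Definition Hk (O : finType) (V : eqType) (p : O -> R) (f : O -> V) : R :=
  - \big[Rplus/0]_(w : O) (p w * log2 (cp p f w)).

Lemma cp_ge (O : finType) (V : eqType) (p : O -> R) (f : O -> V) w :
  (forall w, 0 <= p w) -> p w <= cp p f w.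
Proof.
move=> p0; rewrite /cp (bigD1 w) //=.
have := @sumR_ge0 _ (index_enum O) (fun i => (f i == f w) && (i != w)) p (fun i _ => p0 i).
lra.
Qed.

Lemma Hk_ext (O : finType) (V1 V2 : eqType) (p : O -> R) (f : O -> V1) (g : O -> V2) :
  (forall w w', (f w' == f w) = (g w' == g w)) -> Hk p f = Hk p g.
Proof.
move=> H; rewrite /Hk; congr (- _); apply: eq_bigr => w _.
by rewrite /cp (eq_bigl (fun w' => g w' == g w)) // => w'; rewrite H.
Qed.

Lemma Hk_const (O : finType) (V : eqType) (p : O -> R) (f : O -> V) :
  \big[Rplus/0]_w p w = 1 -> (forall w w', f w = f w') -> Hk p f = 0.
Proof.
move=> s1 H; rewrite /Hk big1 ?Ropp_0 // => w _.
rewrite /cp (eq_bigl predT) ?s1.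
  by rewrite /log2 ln_1; lra.
by move=> w'; rewrite /= (H w' w) eqxx.
Qed.

Lemma entropy_Hk (T O : finType) (p : O -> R) (xi : T -> O -> nat) A :
  entropy p xi A = Hk p (joint xi A).
Proof.
rewrite /entropy /Hk; congr (- _).
set j := joint xi A.
set r := undup _.
have ur : uniq r by apply: undup_uniq.
have mr : forall w, j w \in r by move=> w; rewrite mem_undup; apply: map_f; rewrite mem_enum.
transitivity (\big[Rplus/0]_(v <- r) \big[Rplus/0]_(w | j w == v) (p w * log2 (cp p j w))).
  apply: eq_bigr => v _; rewrite /prob_joint big_distrl /=.
  apply: eq_bigr => w /eqP jw; congr (_ * log2 _).
  rewrite /cp /prob_joint; apply: eq_bigl => w'; rewrite -jw; by [].
rewrite (exchange_big_dep predT) //=.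
transitivity (\big[Rplus/0]_(w : O) \big[Rplus/0]_(v <- r | j w == v) (p w * log2 (cp p j w))).
  apply: eq_bigr => w _; apply: eq_bigl => v; by [].
apply: eq_bigr => w _.
rewrite big_mkcond (bigD1_seq (j w)) //= eqxx big1 ?Rplus_0_r //.
by move=> v; rewrite eq_sym => /negbTE ->.
Qed.
Lemma cp_prod (O1 O2 : finType) (V1 V2 : eqType) (p1 : O1 -> R) (p2 : O2 -> R)
  (G : O1 -> V1) (F : O1 -> O2 -> V2) w1 w2 :
  (forall w1 w1', G w1' = G w1 -> F w1' =1 F w1) ->
  cp (fun w : O1 * O2 => p1 w.1 * p2 w.2) (fun w => (G w.1, F w.1 w.2)) (w1, w2)
  = cp p1 G w1 * cp p2 (F w1) w2.
Proof.
move=> hF; rewrite /cp big_mkcond /=.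
rewrite -(pair_big predT predT (fun a b => if (G a, F a b) == (G w1, F w1 w2) then p1 a * p2 b else 0)) /=.
rewrite [X in _ = X * _]big_mkcond big_distrl /=.
apply: eq_bigr => a _.
case: eqP => Ga.
  rewrite big_distrr [RHS]big_mkcond /=; apply: eq_bigr => b _.
  have E : ((G a, F a b) == (G w1, F w1 w2)) = (F w1 b == F w1 w2).
    by rewrite (hF _ _ Ga b) Ga; apply/eqP/eqP => [[]|->].
  by rewrite E; case: (_ == _); ring.
rewrite Rmult_0_l big1 // => b _.
case: eqP => // - [] //.
Qed.

Lemma log2_mult x y : 0 < x -> 0 < y -> log2 (x * y) = log2 x + log2 y.
Proof. by move=> hx hy; rewrite /log2 ln_mult // /Rdiv Rmult_plus_distr_r. Qed.

Lemma sum_prod (O1 O2 : finType) (F : O1 -> O2 -> R) :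
  \big[Rplus/0]_(w : O1 * O2) F w.1 w.2 = \big[Rplus/0]_w1 \big[Rplus/0]_w2 F w1 w2.
Proof. by rewrite pair_big. Qed.

Lemma Hk_prod (O1 O2 : finType) (V1 V2 : eqType) (p1 : O1 -> R) (p2 : O2 -> R)
  (G : O1 -> V1) (F : O1 -> O2 -> V2) :
  (forall w, 0 <= p1 w) -> (forall w, 0 <= p2 w) -> \big[Rplus/0]_w p2 w = 1 ->
  (forall w1 w1', G w1' = G w1 -> F w1' =1 F w1) ->
  Hk (fun w : O1 * O2 => p1 w.1 * p2 w.2) (fun w => (G w.1, F w.1 w.2))
  = Hk p1 G + \big[Rplus/0]_w1 (p1 w1 * Hk p2 (F w1)).
Proof.
move=> p10 p20 s2 hF.
rewrite /Hk.
transitivity (- \big[Rplus/0]_(w : O1 * O2)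
   ((fun a b => p1 a * p2 b * log2 (cp p1 G a) + p1 a * (p2 b * log2 (cp p2 (F a) b))) w.1 w.2)).
  congr (- _); apply: eq_bigr => [[a b]] _ /=.
  rewrite (cp_prod _ _ _ _ hF).
  have c1 := cp_ge G a p10; have c2 := cp_ge (F a) b p20.
  have [pa|pa] := Rle_lt_or_eq_dec _ _ (p10 a); last by rewrite -pa; ring.
  have [pb|pb] := Rle_lt_or_eq_dec _ _ (p20 b); last by rewrite -pb; ring.
  rewrite log2_mult; [ring|lra|lra].
rewrite (sum_prod (fun a b => p1 a * p2 b * log2 (cp p1 G a) + p1 a * (p2 b * log2 (cp p2 (F a) b)))).
rewrite (eq_bigr (fun a => p1 a * log2 (cp p1 G a) + p1 a * (\big[Rplus/0]_b (p2 b * log2 (cp p2 (F a) b))))).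
  rewrite big_split /= Ropp_plus_distr; congr (_ + _).
  rewrite sumR_opp; apply: eq_bigr => a _; ring.
move=> a _; rewrite big_split /= -!big_distrr /= -big_distrl -big_distrr /= s2; ring.
Qed.

Lemma joint_eq (T O : finType) (xi : T -> O -> nat) A w w' :
  joint xi A w = joint xi A w' <-> (forall x, x \in A -> xi x w = xi x w').
Proof.
split.
  move=> /(congr1 (fun f : {ffun T -> option nat} => f)) E x xA.
  have := congr1 (fun f : {ffun T -> option nat} => f x) E.
  by rewrite /joint !ffunE xA => -[].
move=> H; apply/ffunP => x; rewrite /joint !ffunE.
by case: ifP => // xA; rewrite H.
Qed.

Lemma distr_prod (O1 O2 : finType) (p1 : O1 -> R) (p2 : O2 -> R) :
  distribution p1 -> distribution p2 ->
  distribution (fun w : O1 * O2 => p1 w.1 * p2 w.2).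
Proof.
move=> [p10 s1] [p20 s2]; split.
  by move=> w; apply: Rmult_le_pos.
rewrite (sum_prod (fun a b => p1 a * p2 b)).
rewrite (eq_bigr (fun a => p1 a * 1)); last by move=> a _; rewrite -big_distrr /= s2.
by rewrite -big_distrl /= s1; ring.
Qed.

Lemma pickle_inj (T : countType) : injective (@pickle T).
Proof. exact: pcan_inj pickleK. Qed.

Definition frv (T1 T2 O : finType) (phi : T1 -> T2) (xi : T1 -> O -> nat)
  (y : T2) (w : O) : nat := pickle [seq xi x w | x <- enum T1 & phi x == y].

Lemma entropy_frv (T1 T2 O : finType) (p : O -> R) (phi : T1 -> T2)
  (xi : T1 -> O -> nat) (B : {set T2}) :
  entropy p (frv phi xi) B = entropy p xi (phi @^-1: B).
Proof.
rewrite !entropy_Hk; apply: Hk_ext => w w'.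
apply/eqP/eqP; rewrite !joint_eq.
  move=> H x; rewrite inE => xB.
  have := H _ xB; rewrite /frv => /pickle_inj /eq_in_map E.
  by apply: E; rewrite mem_filter eqxx mem_enum.
move=> H y yB; rewrite /frv; congr pickle; apply/eq_in_map => x.
by rewrite mem_filter => /andP[/eqP Ex _]; apply: H; rewrite inE Ex.
Qed.

Lemma ent_double (T : finType) (g : {set T} -> R) :
  entropic g -> entropic (fun A => 2 * g A).
Proof.
move=> [O [p [xi [dp E]]]].
have [p0 s1] := dp.
exists (O * O)%type, (fun w : O * O => p w.1 * p w.2),
  (fun x (w : O * O) => pickle (xi x w.1, xi x w.2)).
split; first exact: distr_prod.
move=> A; rewrite E !entropy_Hk.
rewrite (@Hk_ext _ _ _ _ _ (fun w : O * O => (joint xi A w.1, (fun _ => joint xi A) w.1 w.2))).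
  rewrite (@Hk_prod _ _ _ _ p p (joint xi A) (fun _ => joint xi A)) //.
  rewrite (eq_bigr (fun a => Hk p (joint xi A) * p a)); last by move=> a _; ring.
  by rewrite -big_distrr /= s1; ring.
move=> w w'; apply/eqP/eqP.
  rewrite joint_eq => H; congr pair; apply/joint_eq => x xA;
  by have := H x xA => /pickle_inj [].
by case=> /joint_eq H1 /joint_eq H2; apply/joint_eq => x xA; rewrite H1 // H2.
Qed.

Lemma ent_pow (T : finType) (g : {set T} -> R) k :
  entropic g -> entropic (fun A => 2 ^ k * g A).
Proof.
move=> eg; elim: k => [|k IH].
  have -> : (fun A => 2 ^ 0 * g A) = g by apply: functional_extensionality => A /=; ring.
  exact: eg.
have -> : (fun A => 2 ^ k.+1 * g A) = (fun A => 2 * (2 ^ k * g A)).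
  by apply: functional_extensionality => A /=; ring.
exact: ent_double IH.
Qed.

Lemma ent_mix (T S O : finType) (q : S -> R) (p : O -> R) (xi : S -> T -> O -> nat) :
  distribution q -> distribution p ->
  entropic (fun B => if B == set0 then 0
            else Hk q (fun s => s) + \big[Rplus/0]_s (q s * entropy p (xi s) B)).
Proof.
move=> dq dp; have [q0 sq] := dq; have [p0 sp] := dp.
exists (S * O)%type, (fun w : S * O => q w.1 * p w.2),
  (fun x (w : S * O) => pickle (w.1, xi w.1 x w.2)).
split; first exact: distr_prod.
move=> B; rewrite entropy_Hk.
case: eqP => [->|/eqP Bn].
  symmetry; apply: Hk_const; first by have [] := distr_prod dq dp.
  by move=> w w'; apply/joint_eq => x; rewrite inE.
rewrite (@Hk_ext _ _ _ _ _ (fun w : S * O => ((fun s => s) w.1, (fun s => joint (xi s) B) w.1 w.2))).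
  rewrite (@Hk_prod _ _ _ _ q p (fun s => s) (fun s => joint (xi s) B)) //; last by move=> a b /= ->.
  by congr (_ + _); apply: eq_bigr => s _; rewrite entropy_Hk.
move=> w w'; apply/eqP/eqP.
  rewrite joint_eq => H.
  have [x0 x0B] : exists x0, x0 \in B.
    by case/set0Pn: Bn => x0 ?; exists x0.
  have := H _ x0B => /pickle_inj [] /= E1 _.
  move: H; case: w E1 => s o; case: w' => s' o' /= -> H.
  congr pair; apply/joint_eq => x xB.
  by have := H _ xB => /pickle_inj [].
case: w => s o; case: w' => s' o' /= [-> /joint_eq H].
by apply/joint_eq => x xB /=; rewrite H.
Qed.

Lemma sum_ob (F : option bool -> R) :
  \big[Rplus/0]_s F s = F None + F (Some true) + F (Some false).
Proof.
rewrite (bigD1 None) //= (bigD1 (Some true)) //= (bigD1 (Some false)) //= big1; first ring.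
by case=> [[]|].
Qed.

Lemma ln_le_sub1 y : 0 < y -> ln y <= y - 1.
Proof. move=> hy; have := exp_ineq1_le (ln y); rewrite exp_ln //; lra. Qed.

Lemma invln2 : 0 < / ln 2 < 2.
Proof.
have h := ln_lt_2; split; first by apply: Rinv_0_lt_compat; lra.
have h2 : 0 < / 2 * ln 2 by apply: Rmult_lt_0_compat; lra.
have := Rinv_lt_contravar (/2) (ln 2) h2 h; rewrite Rinv_inv; lra.
Qed.

Lemma log2E x : log2 x = ln x * / ln 2.
Proof. by []. Qed.

Lemma pow2_ge1 k : 1 <= 2 ^ k.
Proof. elim: k => [|k IH] /=; lra. Qed.

Lemma ent1_ge0 x : 0 <= x <= 1 -> 0 <= - (x * log2 x).
Proof.
move=> [h0 h1]; have [L1 L2] := invln2; rewrite log2E.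
have [hx|<-] := Rle_lt_or_eq_dec _ _ h0; last lra.
have := ln_le_sub1 hx => hl.
have h3 : x * ln x <= 0 by nra.
rewrite -Rmult_assoc; nra.
Qed.

Lemma xlnx_bound c : 0 < c -> - (c * ln c) <= 1 - c.
Proof.
move=> hc; have := ln_le_sub1 (Rinv_0_lt_compat _ hc).
rewrite ln_Rinv // => h.
have e : c * / c = 1 by field; lra.
nra.
Qed.

Lemma ent_small k c : 0 <= c <= 1 ->
  - (c / 2 ^ k * log2 (c / 2 ^ k)) <= (2 * INR k + 4) / 2 ^ k.
Proof.
move=> [c0 c1]; have N1 := pow2_ge1 k; have [L1 L2] := invln2.
have Nk : 0 < 2 ^ k by lra.
have kp := pos_INR k.
have [hc|<-] := Rle_lt_or_eq_dec _ _ c0; last first.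
  rewrite /Rdiv !Rmult_0_l Ropp_0; apply: Rmult_le_pos; first lra.
  by apply: Rlt_le; apply: Rinv_0_lt_compat.
have l2 : ln 2 <> 0 by have := ln_lt_2; lra.
have E : log2 (c / 2 ^ k) = ln c * / ln 2 - INR k.
  rewrite log2E /Rdiv ln_mult //; last by apply: Rinv_0_lt_compat.
  rewrite ln_Rinv // ln_pow; last lra. field => //.
rewrite E.
have X := xlnx_bound hc.
have -> : - (c / 2 ^ k * (ln c * / ln 2 - INR k)) =
          (c * INR k + (- (c * ln c)) * / ln 2) * / 2 ^ k by field; lra.
rewrite /Rdiv; apply: Rmult_le_compat_r; first by apply: Rlt_le; apply: Rinv_0_lt_compat.
nra.
Qed.

Lemma ent_big k : - ((1 - / 2 ^ k) * log2 (1 - / 2 ^ k)) <= 2 / 2 ^ k.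
Proof.
have N1 := pow2_ge1 k; have [L1 L2] := invln2.
have u0 : 0 < / 2 ^ k by apply: Rinv_0_lt_compat; lra.
have u1 : / 2 ^ k <= 1 by rewrite -Rinv_1; apply: Rinv_le_contravar; lra.
set u := / 2 ^ k in u0 u1 *.
rewrite /Rdiv -/u.
have [hx|hx] := Rle_lt_or_eq_dec 0 (1 - u) ltac:(lra); last first.
  rewrite -hx Rmult_0_l Ropp_0; lra.
have X := xlnx_bound hx.
rewrite log2E; nra.
Qed.

Lemma grow k : (4 * INR k + 10) * (INR k + 1) <= 16 * 2 ^ k.
Proof.
elim: k => [|k IH]; first by rewrite /=; lra.
rewrite S_INR /=.
case: k IH => [|k] IH; first by rewrite /=; lra.
rewrite S_INR in IH *; have := pos_INR k; nra.
Qed.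

Definition qmix (t : R) (k : nat) (s : option bool) : R :=
  match s with
  | None => 1 - / 2 ^ k
  | Some true => t / 2 ^ k
  | Some false => (1 - t) / 2 ^ k
  end.

Lemma qmix_distr t k : 0 <= t <= 1 -> distribution (qmix t k).
Proof.
move=> ht; have N1 := pow2_ge1 k.
have u0 : 0 < / 2 ^ k by apply: Rinv_0_lt_compat; lra.
have u1 : / 2 ^ k <= 1 by rewrite -Rinv_1; apply: Rinv_le_contravar; lra.
split.
  case=> [[]|] /=; rewrite /Rdiv; nra.
rewrite sum_ob /=; field; lra.
Qed.

Lemma Hq_bound t k : 0 <= t <= 1 ->
  0 <= Hk (qmix t k) (fun s => s) <= (4 * INR k + 10) / 2 ^ k.
Proof.
move=> ht; have N1 := pow2_ge1 k.
have u0 : 0 < / 2 ^ k by apply: Rinv_0_lt_compat; lra.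
have u1 : / 2 ^ k <= 1 by rewrite -Rinv_1; apply: Rinv_le_contravar; lra.
have -> : Hk (qmix t k) (fun s => s) =
  - (qmix t k None * log2 (qmix t k None)) +
  - (qmix t k (Some true) * log2 (qmix t k (Some true))) +
  - (qmix t k (Some false) * log2 (qmix t k (Some false))).
  rewrite /Hk sum_ob /cp !big_pred1_eq; ring.
have b1 := ent_big k.
have b2 := ent_small k ht.
have b3 := ent_small k (c := 1 - t) ltac:(lra).
have g1 : 0 <= qmix t k None <= 1 by rewrite /=; lra.
have g2 : 0 <= qmix t k (Some true) <= 1 by rewrite /= /Rdiv; nra.
have g3 : 0 <= qmix t k (Some false) <= 1 by rewrite /= /Rdiv; nra.
have := ent1_ge0 g1; have := ent1_ge0 g2; have := ent1_ge0 g3.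
rewrite /=; split; first lra.
rewrite /Rdiv in b1 b2 b3 *; lra.
Qed.

Lemma Hq_small e : 0 < e -> exists k, (4 * INR k + 10) / 2 ^ k < e.
Proof.
move=> he; have [k hk] := INR_unbounded (16 / e).
exists k; have G := grow k; have N1 := pow2_ge1 k; have kp := pos_INR k.
apply: (Rmult_lt_reg_r (2 ^ k)); first lra.
have -> : (4 * INR k + 10) / 2 ^ k * 2 ^ k = 4 * INR k + 10 by field; lra.
have : 16 < e * INR k by move: hk; rewrite /Rdiv => hk;
  have := Rmult_lt_compat_l e _ _ he hk; rewrite -Rmult_assoc (Rmult_comm e) Rmult_assoc Rinv_r; lra.
nra.
Qed.

Lemma entropic_factor (T1 T2 : finType) (phi : T1 -> T2) (g : {set T1} -> R) :
  entropic g -> entropic (fun B => g (phi @^-1: B)).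
Proof.
move=> [O [p [xi [dp E]]]]; exists O, p, (frv phi xi); split => // B.
by rewrite entropy_frv E.
Qed.

Lemma entropy_zero (T O : finType) (p : O -> R) B :
  distribution p -> entropy p (fun (_ : T) (_ : O) => 0%nat) B = 0.
Proof.
move=> [_ s]; rewrite entropy_Hk; apply: Hk_const => // w w'.
Qed.

Theorem lemma2p10 (M : finType) (h : {set M} -> R) (a : M) (alpha1 alpha2 : R) :
  polymatroid h ->
  (0 <= alpha1)%R -> (0 <= alpha2)%R -> (alpha1 + alpha2 = h [set a])%R ->
  exists h' : {set option M} -> R,
    [/\ polymatroid h',
        h' [set Some a] = alpha1,
        h' [set None] = alpha2,
        (forall B : {set M}, h B = factor (collapse a) h' B) &
        (almost_entropic h <-> almost_entropic h')].
Proof.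
move=> [h0 hpos hmono hsub] a1 a2 hsum.
set t := alpha1 / h [set a].
set psi := fun x : M => if x == a then None else Some x.
have [t0 t1 ta] : [/\ 0 <= t, t <= 1 & t * h [set a] = alpha1].
  have := hpos [set a] => ha.
  have [hp|hz] := Rle_lt_or_eq_dec _ _ ha.
    have e : t * h [set a] = alpha1 by rewrite /t; field; lra.
    split => //; nra.
  have z : alpha1 = 0 by lra.
  by rewrite /t z /Rdiv !Rmult_0_l; split; lra.
clearbody t.
pose h' := fun X : {set option M} => t * h (Some @^-1: X) + (1 - t) * h (psi @^-1: X).
have fac : forall B, h B = h' (collapse a @^-1: B).
  move=> B; rewrite /h'.
  have -> : Some @^-1: (collapse a @^-1: B) = B by apply/setP => x; rewrite !inE.
  have -> : psi @^-1: (collapse a @^-1: B) = B.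
    by apply/setP => x; rewrite !inE /psi; case: eqP => [->|].
  ring.
exists h'; split.
- split.
  + by rewrite /h' !preimset0 h0; ring.
  + move=> A; rewrite /h'; have := hpos (Some @^-1: A); have := hpos (psi @^-1: A); nra.
  + move=> A B AB; rewrite /h'.
    have := hmono (Some @^-1: A) (Some @^-1: B) (preimsetS _ AB).
    have := hmono (psi @^-1: A) (psi @^-1: B) (preimsetS _ AB); nra.
  + move=> A B; rewrite /h' !preimsetU !preimsetI.
    have H1 := hsub (Some @^-1: A) (Some @^-1: B); have H2 := hsub (psi @^-1: A) (psi @^-1: B).
    have := Rmult_le_compat_l t _ _ t0 H1.
    have := Rmult_le_compat_l (1 - t) _ _ ltac:(lra) H2.
    set u1 := h (Some @^-1: A :|: Some @^-1: B); set u2 := h (Some @^-1: A :&: Some @^-1: B).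
    set u3 := h (psi @^-1: A :|: psi @^-1: B); set u4 := h (psi @^-1: A :&: psi @^-1: B).
    set u5 := h (Some @^-1: A); set u6 := h (Some @^-1: B).
    set u7 := h (psi @^-1: A); set u8 := h (psi @^-1: B).
    lra.
- rewrite /h'.
  have -> : Some @^-1: [set Some a] = [set a] by apply/setP => x; rewrite !inE; apply/eqP/eqP => [[]|->].
  have -> : psi @^-1: [set Some a] = set0.
    apply/setP => x; rewrite !inE /psi; case: ifP => [//|/eqP ne].
    by apply/negbTE/negP => /eqP [E]; exact: ne E.
  by rewrite h0; lra.
- rewrite /h'.
  have -> : (@Some M) @^-1: [set None] = set0 by apply/setP => x; rewrite !inE.
  have -> : psi @^-1: [set None] = [set a].
    by apply/setP => x; rewrite !inE /psi; case: (x == a).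
  by rewrite h0; lra.
- by move=> B; rewrite fac.
split.
-
  move=> ae eps he.
  have he2 : 0 < eps / 2 by lra.
  have [k hk] := Hq_small he2.
  have [g [eg hg]] := ae _ he2.
  have [O [p [xi [dp E]]]] := ent_pow k eg.
  pose xis := fun s : option bool => match s with
    | None => fun (_ : option M) (_ : O) => 0%nat
    | Some true => frv Some xi
    | Some false => frv psi xi end.
  have := ent_mix xis (qmix_distr k (conj t0 t1)) dp.
  set Y := fun B => _ => eY.
  exists Y; split => // B.
  rewrite /Y; case: eqP => [->|/eqP Bn].
    by rewrite /h' !preimset0 h0 Rmult_0_r Rmult_0_r Rplus_0_r Rminus_0_r Rabs_R0.
  rewrite sum_ob /= entropy_zero // !entropy_frv -!E.
  have [Hq0 Hq1] := Hq_bound k (conj t0 t1).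
  have N1 := pow2_ge1 k.
  have -> : Hk (qmix t k) (fun s => s) + ((1 - / 2 ^ k) * 0 +
     t / 2 ^ k * (2 ^ k * g (Some @^-1: B)) + (1 - t) / 2 ^ k * (2 ^ k * g (psi @^-1: B)))
     = Hk (qmix t k) (fun s => s) + (t * g (Some @^-1: B) + (1 - t) * g (psi @^-1: B)).
    by field; lra.
  have := hg (Some @^-1: B); have := hg (psi @^-1: B).
  move=> /Rabs_def2 [d1 d2] /Rabs_def2 [d3 d4].
  rewrite /h'; apply: Rabs_def1; nra.
-
  move=> ae eps he.
  have [g [eg hg]] := ae _ he.
  exists (fun B : {set M} => g (collapse a @^-1: B)); split; first exact: entropic_factor.
  by move=> B; rewrite fac.
Qed.
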